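(* The acute hat can be realized in $\mathbb{R}^3$ as an embedded polyhedral surface, with each face congruent to its prescribed triangle. In this realization the boundary $a_1a_2a_3$ is an equilateral triangle, and the surface lies within the right prism whose base is this equilateral triangle.
   Context: A hat is a triangulated closed disk with seven vertices $a_1,a_2,a_3$ (on the boundary), $p_1,p_2,p_3$ and $o$ (the center), both of the latter groups interior. Indices are taken mod 3. It has nine triangular faces: - the brim triangles $a_i a_{i+1} p_{i+2}$; - the band triangles $a_i p_{i+1} p_{i+2}$; - the crown triangles $o\, p_i p_{i+1}$. Its boundary is the cycle $a_1a_2a_3$. The acute hat is the hat whose faces have the following metric shapes, all acute isosceles triangles: - each brim triangle $a_i a_{i+1} p_{i+2}$ has apex angle $85^\circ$ at $p_{i+2}$ and base angles $47.5^\circ$ at $a_i,a_{i+1}$; - each band triangle $a_i p_{i+1}p_{i+2}$ has apex angle $10^\circ$ at $a_i$ and base angles $85^\circ$; - each crown triangle $o\,p_ip_{i+1}$ is congruent to the band triangles, with apex angle $10^\circ$ at $o$ and base angles $85^\circ$. *)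

(* Defs.v *)
From Stdlib Require Import Reals Lra List.
Import ListNotations.
Open Scope R_scope.

Record pt := Pt { px : R; py : R; pz : R }.

Definition vadd (u v : pt) : pt := Pt (px u + px v) (py u + py v) (pz u + pz v).
Definition vsub (u v : pt) : pt := Pt (px u - px v) (py u - py v) (pz u - pz v).
Definition vscale (c : R) (u : pt) : pt := Pt (c * px u) (c * py u) (c * pz u).
Definition vzero : pt := Pt 0 0 0.
Definition dot (u v : pt) : R := px u * px v + py u * py v + pz u * pz v.
Definition dist3 (u v : pt) : R := sqrt (dot (vsub u v) (vsub u v)).

Fixpoint lincomb (ws : list R) (l : list pt) : pt :=
  match ws, l with
  | w :: ws', x :: l' => vadd (vscale w x) (lincomb ws' l')
  | _, _ => vzero
  end.

Definition hull (l : list pt) (x : pt) : Prop :=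
  exists ws : list R,
    length ws = length l /\ Forall (fun w => 0 <= w) ws /\
    fold_right Rplus 0 ws = 1 /\ x = lincomb ws l.

Inductive hvert := Va1 | Va2 | Va3 | Vp1 | Vp2 | Vp3 | Vo.

Definition hvert_eqb (u v : hvert) : bool :=
  match u, v with
  | Va1, Va1 | Va2, Va2 | Va3, Va3 | Vp1, Vp1 | Vp2, Vp2 | Vp3, Vp3 | Vo, Vo => true
  | _, _ => false
  end.

(* Faces (indices mod 3):
   brim  a_i a_{i+1} p_{i+2};  band a_i p_{i+1} p_{i+2};  crown o p_i p_{i+1} *)
Definition brim_faces : list (list hvert) := [[Va1;Va2;Vp3]; [Va2;Va3;Vp1]; [Va3;Va1;Vp2]].
Definition band_faces : list (list hvert) := [[Va1;Vp2;Vp3]; [Va2;Vp3;Vp1]; [Va3;Vp1;Vp2]].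
Definition crown_faces : list (list hvert) := [[Vo;Vp1;Vp2]; [Vo;Vp2;Vp3]; [Vo;Vp3;Vp1]].
Definition hat_faces : list (list hvert) := brim_faces ++ band_faces ++ crown_faces.

Definition common (F G : list hvert) : list hvert :=
  filter (fun v => existsb (hvert_eqb v) G) F.

(* A realization f : hvert -> R^3 is an embedding of the triangulated disk:
   vertices go to distinct points, and any two (closed, geometric) faces meet
   exactly in the convex hull of their common vertices (i.e. in the common
   edge / common vertex / not at all).  Together with non-degeneracy of the
   faces (implied by the prescribed side lengths) this is the standard notion
   of an embedded (geometric) simplicial complex. *)
Definition embedded (f : hvert -> pt) : Prop :=
  (forall u v, f u = f v -> u = v) /\
  forall F G, In F hat_faces -> In G hat_faces ->
    forall x, hull (map f F) x -> hull (map f G) x -> hull (map f (common F G)) x.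

Definition on_surface (f : hvert -> pt) (x : pt) : Prop :=
  exists F, In F hat_faces /\ hull (map f F) x.

(* Triangle (apex, b1, b2) congruent to the isosceles triangle with legs L
   and apex angle theta (in degrees): legs L, base 2 L sin(theta/2). *)
Definition deg (theta : R) : R := theta * PI / 180.
Definition isosceles (apex b1 b2 : pt) (L theta : R) : Prop :=
  dist3 apex b1 = L /\ dist3 apex b2 = L /\ dist3 b1 b2 = 2 * L * sin (deg theta / 2).

(* The acute hat metric, at common scale L:
   brim a_i a_{i+1} p_{i+2}: apex 85 deg at p_{i+2}, base angles 47.5 deg;
   band a_i p_{i+1} p_{i+2}: apex 10 deg at a_i, base angles 85 deg;
   crown o p_i p_{i+1}: apex 10 deg at o (congruent to the band triangles). *)
Definition acute_hat_metric (f : hvert -> pt) (L : R) : Prop :=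
  isosceles (f Vp3) (f Va1) (f Va2) L 85 /\
  isosceles (f Vp1) (f Va2) (f Va3) L 85 /\
  isosceles (f Vp2) (f Va3) (f Va1) L 85 /\
  isosceles (f Va1) (f Vp2) (f Vp3) L 10 /\
  isosceles (f Va2) (f Vp3) (f Vp1) L 10 /\
  isosceles (f Va3) (f Vp1) (f Vp2) L 10 /\
  isosceles (f Vo) (f Vp1) (f Vp2) L 10 /\
  isosceles (f Vo) (f Vp2) (f Vp3) L 10 /\
  isosceles (f Vo) (f Vp3) (f Vp1) L 10.

(* Right prism with base the triangle a1 a2 a3: points y + t n with y in the
   triangle, t >= 0, n a fixed nonzero normal vector of the triangle's plane. *)
Definition in_right_prism (a1 a2 a3 n x : pt) : Prop :=
  exists y t, hull [a1; a2; a3] y /\ 0 <= t /\ x = vadd y (vscale t n).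

(* Main.v *)
Require Import Defs.
From Stdlib Require Import Reals List Lra Psatz Machin Factorial.
Import ListNotations.
Open Scope R_scope.

Definition vopp (u : pt) : pt := Pt (- px u) (- py u) (- pz u).

Definition fP (r t c d h g : R) (v : hvert) : pt :=
  match v with
  | Va1 => Pt r 0 0
  | Va2 => Pt (-(r/2)) (c/2) 0
  | Va3 => Pt (-(r/2)) (-(c/2)) 0
  | Vp1 => Pt (-t) 0 h
  | Vp2 => Pt (t/2) (-(d/2)) h
  | Vp3 => Pt (t/2) (d/2) h
  | Vo => Pt 0 0 (h+g)
  end.

Lemma hull3 u v w x : hull [u;v;w] x ->
  exists a1 a2 a3, 0<=a1 /\ 0<=a2 /\ 0<=a3 /\ a1+a2+a3=1 /\
   x = Pt (a1*px u + a2*px v + a3*px w) (a1*py u + a2*py v + a3*py w)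
          (a1*pz u + a2*pz v + a3*pz w).
Proof.
  intros [ws [Hl [Hf [Hs Hx]]]].
  destruct ws as [|a1 [|a2 [|a3 [|a4 ws]]]]; simpl in Hl; try discriminate.
  pose proof (Forall_inv Hf) as H1. pose proof (Forall_inv_tail Hf) as Hf2.
  pose proof (Forall_inv Hf2) as H2. pose proof (Forall_inv_tail Hf2) as Hf3.
  pose proof (Forall_inv Hf3) as H3. simpl in H1, H2, H3.
  exists a1, a2, a3. simpl in Hs. repeat split; try lra.
  rewrite Hx. simpl; unfold vadd, vscale, vzero; simpl. f_equal; ring.
Qed.

Lemma hull3_intro u v w x a1 a2 a3 : 0<=a1 -> 0<=a2 -> 0<=a3 -> a1+a2+a3=1 ->
   x = Pt (a1*px u + a2*px v + a3*px w) (a1*py u + a2*py v + a3*py w)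
          (a1*pz u + a2*pz v + a3*pz w) -> hull [u;v;w] x.
Proof.
  intros H1 H2 H3 Hs Hx. exists [a1;a2;a3]. split; [reflexivity|]. split; [|split].
  - repeat (apply Forall_cons; [lra|]); apply Forall_nil.
  - simpl; lra.
  - rewrite Hx. simpl; unfold vadd, vscale, vzero; simpl. f_equal; ring.
Qed.

Ltac fa := repeat (apply Forall_cons; [lra|]); apply Forall_nil.
Ltac hwit := split; [reflexivity| split; [fa | split; [simpl; lra |
   subst; simpl; unfold vadd, vscale, vzero; simpl; f_equal; ring]]].

Lemma hull_filter (p : hvert -> bool) (f : hvert -> pt) F1 F2 F3 a1 a2 a3 x :
  0<=a1 -> 0<=a2 -> 0<=a3 -> a1+a2+a3=1 ->
  x = Pt (a1*px (f F1) + a2*px (f F2) + a3*px (f F3))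
         (a1*py (f F1) + a2*py (f F2) + a3*py (f F3))
         (a1*pz (f F1) + a2*pz (f F2) + a3*pz (f F3)) ->
  (p F1 = false -> a1 = 0) -> (p F2 = false -> a2 = 0) -> (p F3 = false -> a3 = 0) ->
  hull (map f (filter p [F1;F2;F3])) x.
Proof.
  intros H1 H2 H3 Hs Hx Z1 Z2 Z3. cbn [filter].
  destruct (p F1) eqn:E1; destruct (p F2) eqn:E2; destruct (p F3) eqn:E3;
  try specialize (Z1 eq_refl); try specialize (Z2 eq_refl); try specialize (Z3 eq_refl);
  cbn [map]; subst; try lra.
  - exists [a1;a2;a3]; hwit.
  - exists [a1;a2]; hwit.
  - exists [a1;a3]; hwit.
  - exists [a1]; hwit.
  - exists [a2;a3]; hwit.
  - exists [a2]; hwit.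
  - exists [a3]; hwit.
Qed.

Lemma pair_sep (f : hvert -> pt) (F1 F2 F3 G1 G2 G3 : hvert) (n : pt) (c0 : R) :
  dot n (f F1) >= c0 -> (existsb (hvert_eqb F1) [G1;G2;G3] = false -> dot n (f F1) > c0) ->
  dot n (f F2) >= c0 -> (existsb (hvert_eqb F2) [G1;G2;G3] = false -> dot n (f F2) > c0) ->
  dot n (f F3) >= c0 -> (existsb (hvert_eqb F3) [G1;G2;G3] = false -> dot n (f F3) > c0) ->
  dot n (f G1) <= c0 -> dot n (f G2) <= c0 -> dot n (f G3) <= c0 ->
  forall x, hull (map f [F1;F2;F3]) x -> hull (map f [G1;G2;G3]) x ->
  hull (map f (common [F1;F2;F3] [G1;G2;G3])) x.
Proof.
  intros K1 S1 K2 S2 K3 S3 L1 L2 L3 x HF HG.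
  simpl map in HF, HG. apply hull3 in HF. apply hull3 in HG.
  destruct HF as [a1 [a2 [a3 [A1 [A2 [A3 [As Ax]]]]]]].
  destruct HG as [b1 [b2 [b3 [B1 [B2 [B3 [Bs Bx]]]]]]].
  assert (E : dot n x = dot n x) by reflexivity.
  rewrite Ax in E at 1. rewrite Bx in E.
  set (u1 := dot n (f F1)) in *. set (u2 := dot n (f F2)) in *. set (u3 := dot n (f F3)) in *.
  set (v1 := dot n (f G1)) in *. set (v2 := dot n (f G2)) in *. set (v3 := dot n (f G3)) in *.
  assert (E2 : a1*u1 + a2*u2 + a3*u3 = b1*v1 + b2*v2 + b3*v3).
  { unfold u1,u2,u3,v1,v2,v3, dot in *. simpl in E. lra. }
  assert (T1 : 0 <= a1*(u1-c0)) by (apply Rmult_le_pos; lra).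
  assert (T2 : 0 <= a2*(u2-c0)) by (apply Rmult_le_pos; lra).
  assert (T3 : 0 <= a3*(u3-c0)) by (apply Rmult_le_pos; lra).
  assert (T4 : 0 <= b1*(c0-v1)) by (apply Rmult_le_pos; lra).
  assert (T5 : 0 <= b2*(c0-v2)) by (apply Rmult_le_pos; lra).
  assert (T6 : 0 <= b3*(c0-v3)) by (apply Rmult_le_pos; lra).
  assert (Sum : a1*(u1-c0) + a2*(u2-c0) + a3*(u3-c0) + b1*(c0-v1) + b2*(c0-v2) + b3*(c0-v3) = 0).
  { replace a3 with (1 - a1 - a2) by lra. replace b3 with (1 - b1 - b2) by lra.
    replace a3 with (1 - a1 - a2) in E2 by lra. replace b3 with (1 - b1 - b2) in E2 by lra.
    lra. }
  unfold common. apply (hull_filter _ f F1 F2 F3 a1 a2 a3); auto.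
  - intro Hp. specialize (S1 Hp). fold u1 in S1.
    assert (Z : a1*(u1-c0) = 0) by lra.
    destruct (Rmult_integral _ _ Z); lra.
  - intro Hp. specialize (S2 Hp). fold u2 in S2.
    assert (Z : a2*(u2-c0) = 0) by lra.
    destruct (Rmult_integral _ _ Z); lra.
  - intro Hp. specialize (S3 Hp). fold u3 in S3.
    assert (Z : a3*(u3-c0) = 0) by lra.
    destruct (Rmult_integral _ _ Z); lra.
Qed.

Ltac sv := intros; unfold dot, vopp in *; cbn [existsb hvert_eqb orb fP px py pz] in *; try discriminate; (lra || nra).
Lemma emb_gen r t c d h g :
  0.78007 <= r <= 0.78017 -> 0.10063 <= t <= 0.10065 -> 1.35114 <= c <= 1.35128 ->
  0.1743 <= d <= 0.17432 -> 0.6779 <= h <= 0.6783 -> 0.9949 <= g <= 0.9950 ->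
  embedded (fP r t c d h g).
Proof.
  intros Hr Ht Hc Hd Hh Hg. split.
  - intros u v; destruct u, v; intro E; try reflexivity; unfold fP in E; injection E; intros; lra.
  - intros F G HF HG. simpl in HF, HG.
    destruct HF as [<-|[<-|[<-|[<-|[<-|[<-|[<-|[<-|[<-|[]]]]]]]]]];
    destruct HG as [<-|[<-|[<-|[<-|[<-|[<-|[<-|[<-|[<-|[]]]]]]]]]].
    + apply (pair_sep _ _ _ _ _ _ _ (Pt 0 0 0) 0); sv.
    + apply (pair_sep _ _ _ _ _ _ _ (Pt 5 4 1) (dot (Pt 5 4 1) (fP r t c d h g Va2))); sv.
    + apply (pair_sep _ _ _ _ _ _ _ (Pt 0 3 0) (dot (Pt 0 3 0) (fP r t c d h g Va1))); sv.
    + apply (pair_sep _ _ _ _ _ _ _ (Pt ((d/2) - 0) (-((t/2) - r)) 0) (dot (Pt ((d/2) - 0) (-((t/2) - r)) 0) (fP r t c d h g Va1))); sv.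
    + apply (pair_sep _ _ _ _ _ _ _ (vopp (Pt ((d/2) - (c/2)) (-((t/2) - (-(r/2)))) 0)) (-(dot (Pt ((d/2) - (c/2)) (-((t/2) - (-(r/2)))) 0) (fP r t c d h g Va2)))); sv.
    + apply (pair_sep _ _ _ _ _ _ _ (Pt 3 5 0) (151/1000)); sv.
    + apply (pair_sep _ _ _ _ _ _ _ (Pt 3 5 (-1)) (-527/1000)); sv.
    + apply (pair_sep _ _ _ _ _ _ _ (Pt 1 5 (-1)) (dot (Pt 1 5 (-1)) (fP r t c d h g Vp3))); sv.
    + apply (pair_sep _ _ _ _ _ _ _ (Pt 6 6 (-1)) (dot (Pt 6 6 (-1)) (fP r t c d h g Vp3))); sv.
    + apply (pair_sep _ _ _ _ _ _ _ (Pt (-5) (-4) (-1)) (dot (Pt (-5) (-4) (-1)) (fP r t c d h g Va2))); sv.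
    + apply (pair_sep _ _ _ _ _ _ _ (Pt 0 0 0) 0); sv.
    + apply (pair_sep _ _ _ _ _ _ _ (Pt (-5) 4 (-1)) (dot (Pt (-5) 4 (-1)) (fP r t c d h g Va3))); sv.
    + apply (pair_sep _ _ _ _ _ _ _ (Pt (-6) 0 0) (151/1000)); sv.
    + apply (pair_sep _ _ _ _ _ _ _ (Pt (0 - (c/2)) (-((-t) - (-(r/2)))) 0) (dot (Pt (0 - (c/2)) (-((-t) - (-(r/2)))) 0) (fP r t c d h g Va2))); sv.
    + apply (pair_sep _ _ _ _ _ _ _ (vopp (Pt (0 - (-(c/2))) (-((-t) - (-(r/2)))) 0)) (-(dot (Pt (0 - (-(c/2))) (-((-t) - (-(r/2)))) 0) (fP r t c d h g Va3)))); sv.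
    + apply (pair_sep _ _ _ _ _ _ _ (Pt (-6) 2 (-1)) (dot (Pt (-6) 2 (-1)) (fP r t c d h g Vp1))); sv.
    + apply (pair_sep _ _ _ _ _ _ _ (Pt (-6) 0 (-1)) (-527/1000)); sv.
    + apply (pair_sep _ _ _ _ _ _ _ (Pt (-6) (-2) (-1)) (dot (Pt (-6) (-2) (-1)) (fP r t c d h g Vp1))); sv.
    + apply (pair_sep _ _ _ _ _ _ _ (Pt 0 (-6) 0) (dot (Pt 0 (-6) 0) (fP r t c d h g Va1))); sv.
    + apply (pair_sep _ _ _ _ _ _ _ (Pt 5 (-4) 1) (dot (Pt 5 (-4) 1) (fP r t c d h g Va3))); sv.
    + apply (pair_sep _ _ _ _ _ _ _ (Pt 0 0 0) 0); sv.
    + apply (pair_sep _ _ _ _ _ _ _ (vopp (Pt ((-(d/2)) - 0) (-((t/2) - r)) 0)) (-(dot (Pt ((-(d/2)) - 0) (-((t/2) - r)) 0) (fP r t c d h g Va1)))); sv.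
    + apply (pair_sep _ _ _ _ _ _ _ (Pt 3 (-5) 0) (151/1000)); sv.
    + apply (pair_sep _ _ _ _ _ _ _ (Pt ((-(d/2)) - (-(c/2))) (-((t/2) - (-(r/2)))) 0) (dot (Pt ((-(d/2)) - (-(c/2))) (-((t/2) - (-(r/2)))) 0) (fP r t c d h g Va3))); sv.
    + apply (pair_sep _ _ _ _ _ _ _ (Pt 6 (-6) (-1)) (dot (Pt 6 (-6) (-1)) (fP r t c d h g Vp2))); sv.
    + apply (pair_sep _ _ _ _ _ _ _ (Pt 1 (-5) (-1)) (dot (Pt 1 (-5) (-1)) (fP r t c d h g Vp2))); sv.
    + apply (pair_sep _ _ _ _ _ _ _ (Pt 3 (-5) (-1)) (-527/1000)); sv.
    + apply (pair_sep _ _ _ _ _ _ _ (vopp (Pt ((d/2) - 0) (-((t/2) - r)) 0)) (-(dot (Pt ((d/2) - 0) (-((t/2) - r)) 0) (fP r t c d h g Va1)))); sv.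
    + apply (pair_sep _ _ _ _ _ _ _ (Pt 1 0 0) (-25/1000)); sv.
    + apply (pair_sep _ _ _ _ _ _ _ (Pt ((-(d/2)) - 0) (-((t/2) - r)) 0) (dot (Pt ((-(d/2)) - 0) (-((t/2) - r)) 0) (fP r t c d h g Va1))); sv.
    + apply (pair_sep _ _ _ _ _ _ _ (Pt 0 0 0) 0); sv.
    + apply (pair_sep _ _ _ _ _ _ _ (Pt 5 (-3) 0) (dot (Pt 5 (-3) 0) (fP r t c d h g Vp3))); sv.
    + apply (pair_sep _ _ _ _ _ _ _ (Pt 5 3 0) (dot (Pt 5 3 0) (fP r t c d h g Vp2))); sv.
    + apply (pair_sep _ _ _ _ _ _ _ (Pt 5 3 (-1)) (dot (Pt 5 3 (-1)) (fP r t c d h g Vp2))); sv.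
    + apply (pair_sep _ _ _ _ _ _ _ (vopp (Pt 0 0 1)) (-h)); sv.
    + apply (pair_sep _ _ _ _ _ _ _ (Pt 5 (-3) (-1)) (dot (Pt 5 (-3) (-1)) (fP r t c d h g Vp3))); sv.
    + apply (pair_sep _ _ _ _ _ _ _ (Pt ((d/2) - (c/2)) (-((t/2) - (-(r/2)))) 0) (dot (Pt ((d/2) - (c/2)) (-((t/2) - (-(r/2)))) 0) (fP r t c d h g Va2))); sv.
    + apply (pair_sep _ _ _ _ _ _ _ (vopp (Pt (0 - (c/2)) (-((-t) - (-(r/2)))) 0)) (-(dot (Pt (0 - (c/2)) (-((-t) - (-(r/2)))) 0) (fP r t c d h g Va2)))); sv.
    + apply (pair_sep _ _ _ _ _ _ _ (Pt (-3) 5 0) (-151/1000)); sv.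
    + apply (pair_sep _ _ _ _ _ _ _ (Pt (-5) 3 0) (dot (Pt (-5) 3 0) (fP r t c d h g Vp3))); sv.
    + apply (pair_sep _ _ _ _ _ _ _ (Pt 0 0 0) 0); sv.
    + apply (pair_sep _ _ _ _ _ _ _ (Pt 0 3 0) (dot (Pt 0 3 0) (fP r t c d h g Vp1))); sv.
    + apply (pair_sep _ _ _ _ _ _ _ (Pt 0 6 (-1)) (dot (Pt 0 6 (-1)) (fP r t c d h g Vp1))); sv.
    + apply (pair_sep _ _ _ _ _ _ _ (Pt (-5) 3 (-1)) (dot (Pt (-5) 3 (-1)) (fP r t c d h g Vp3))); sv.
    + apply (pair_sep _ _ _ _ _ _ _ (vopp (Pt 0 0 1)) (-h)); sv.
    + apply (pair_sep _ _ _ _ _ _ _ (Pt (-3) (-5) 0) (-151/1000)); sv.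
    + apply (pair_sep _ _ _ _ _ _ _ (Pt (0 - (-(c/2))) (-((-t) - (-(r/2)))) 0) (dot (Pt (0 - (-(c/2))) (-((-t) - (-(r/2)))) 0) (fP r t c d h g Va3))); sv.
    + apply (pair_sep _ _ _ _ _ _ _ (vopp (Pt ((-(d/2)) - (-(c/2))) (-((t/2) - (-(r/2)))) 0)) (-(dot (Pt ((-(d/2)) - (-(c/2))) (-((t/2) - (-(r/2)))) 0) (fP r t c d h g Va3)))); sv.
    + apply (pair_sep _ _ _ _ _ _ _ (Pt (-5) (-3) 0) (dot (Pt (-5) (-3) 0) (fP r t c d h g Vp2))); sv.
    + apply (pair_sep _ _ _ _ _ _ _ (Pt 0 (-6) 0) (dot (Pt 0 (-6) 0) (fP r t c d h g Vp1))); sv.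
    + apply (pair_sep _ _ _ _ _ _ _ (Pt 0 0 0) 0); sv.
    + apply (pair_sep _ _ _ _ _ _ _ (vopp (Pt 0 0 1)) (-h)); sv.
    + apply (pair_sep _ _ _ _ _ _ _ (Pt (-5) (-3) (-1)) (dot (Pt (-5) (-3) (-1)) (fP r t c d h g Vp2))); sv.
    + apply (pair_sep _ _ _ _ _ _ _ (Pt 0 (-6) (-1)) (dot (Pt 0 (-6) (-1)) (fP r t c d h g Vp1))); sv.
    + apply (pair_sep _ _ _ _ _ _ _ (Pt (-3) (-5) 1) (527/1000)); sv.
    + apply (pair_sep _ _ _ _ _ _ _ (Pt 6 (-2) 1) (dot (Pt 6 (-2) 1) (fP r t c d h g Vp1))); sv.
    + apply (pair_sep _ _ _ _ _ _ _ (Pt (-6) 6 1) (dot (Pt (-6) 6 1) (fP r t c d h g Vp2))); sv.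
    + apply (pair_sep _ _ _ _ _ _ _ (Pt (-5) (-3) 1) (dot (Pt (-5) (-3) 1) (fP r t c d h g Vp2))); sv.
    + apply (pair_sep _ _ _ _ _ _ _ (Pt 0 (-6) 1) (dot (Pt 0 (-6) 1) (fP r t c d h g Vp1))); sv.
    + apply (pair_sep _ _ _ _ _ _ _ (Pt 0 0 1) h); sv.
    + apply (pair_sep _ _ _ _ _ _ _ (Pt 0 0 0) 0); sv.
    + apply (pair_sep _ _ _ _ _ _ _ (vopp (Pt d t 0)) 0); sv.
    + apply (pair_sep _ _ _ _ _ _ _ (vopp (Pt 0 1 0)) 0); sv.
    + apply (pair_sep _ _ _ _ _ _ _ (Pt (-1) (-5) 1) (dot (Pt (-1) (-5) 1) (fP r t c d h g Vp3))); sv.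
    + apply (pair_sep _ _ _ _ _ _ _ (Pt 6 0 1) (527/1000)); sv.
    + apply (pair_sep _ _ _ _ _ _ _ (Pt (-1) 5 1) (dot (Pt (-1) 5 1) (fP r t c d h g Vp2))); sv.
    + apply (pair_sep _ _ _ _ _ _ _ (Pt 0 0 1) h); sv.
    + apply (pair_sep _ _ _ _ _ _ _ (Pt 5 (-3) 1) (dot (Pt 5 (-3) 1) (fP r t c d h g Vp3))); sv.
    + apply (pair_sep _ _ _ _ _ _ _ (Pt 5 3 1) (dot (Pt 5 3 1) (fP r t c d h g Vp2))); sv.
    + apply (pair_sep _ _ _ _ _ _ _ (Pt d t 0) 0); sv.
    + apply (pair_sep _ _ _ _ _ _ _ (Pt 0 0 0) 0); sv.
    + apply (pair_sep _ _ _ _ _ _ _ (Pt d (-t) 0) 0); sv.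
    + apply (pair_sep _ _ _ _ _ _ _ (Pt (-6) (-6) 1) (dot (Pt (-6) (-6) 1) (fP r t c d h g Vp3))); sv.
    + apply (pair_sep _ _ _ _ _ _ _ (Pt 6 2 1) (dot (Pt 6 2 1) (fP r t c d h g Vp1))); sv.
    + apply (pair_sep _ _ _ _ _ _ _ (Pt (-3) 5 1) (527/1000)); sv.
    + apply (pair_sep _ _ _ _ _ _ _ (Pt (-5) 3 1) (dot (Pt (-5) 3 1) (fP r t c d h g Vp3))); sv.
    + apply (pair_sep _ _ _ _ _ _ _ (Pt 0 0 1) h); sv.
    + apply (pair_sep _ _ _ _ _ _ _ (Pt 0 6 1) (dot (Pt 0 6 1) (fP r t c d h g Vp1))); sv.
    + apply (pair_sep _ _ _ _ _ _ _ (Pt 0 1 0) 0); sv.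
    + apply (pair_sep _ _ _ _ _ _ _ (vopp (Pt d (-t) 0)) 0); sv.
    + apply (pair_sep _ _ _ _ _ _ _ (Pt 0 0 0) 0); sv.
Qed.


Lemma sqrt_eq x y : 0 <= y -> x = y*y -> sqrt x = y.
Proof. intros Hy ->. apply sqrt_square; exact Hy. Qed.

Lemma metric_gen r t c d h g :
  c*c = 3*(r*r) -> d*d = 3*(t*t) -> c*d = 3*(r*t) ->
  h*h = 1 - r*r + r*t - t*t -> g*g = 1 - t*t -> 0 <= c -> 0 <= d ->
  2 * 1 * sin (deg 85 / 2) = c -> 2 * 1 * sin (deg 10 / 2) = d ->
  acute_hat_metric (fP r t c d h g) 1.
Proof.
  intros E1 E2 E3 E4 E5 Pc Pd Sc Sd.
  unfold acute_hat_metric, isosceles. rewrite Sc, Sd.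
  unfold dist3, dot, vsub; cbn [fP px py pz].
  repeat split; apply sqrt_eq; try lra.
Qed.

Lemma div_le a b k : 0 < b -> a <= k*b -> a/b <= k.
Proof. intros Hb H. unfold Rdiv. apply (Rmult_le_reg_r b); [lra|].
  rewrite Rmult_assoc, Rinv_l by lra. lra. Qed.

Lemma prism_convex A1 A2 A3 n u v w x :
  in_right_prism A1 A2 A3 n u -> in_right_prism A1 A2 A3 n v -> in_right_prism A1 A2 A3 n w ->
  hull [u;v;w] x -> in_right_prism A1 A2 A3 n x.
Proof.
  intros [yu [tu [Hu [Tu Eu]]]] [yv [tv [Hv [Tv Ev]]]] [yw [tw [Hw [Tw Ew]]]] Hx.
  apply hull3 in Hu, Hv, Hw, Hx.
  destruct Hu as [u1 [u2 [u3 [U1 [U2 [U3 [Us Uy]]]]]]].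
  destruct Hv as [v1 [v2 [v3 [V1 [V2 [V3 [Vs Vy]]]]]]].
  destruct Hw as [w1 [w2 [w3 [W1 [W2 [W3 [Ws Wy]]]]]]].
  destruct Hx as [a1 [a2 [a3 [X1 [X2 [X3 [Xs Xx]]]]]]].
  subst.
  eexists; exists (a1*tu + a2*tv + a3*tw). split; [|split].
  - apply (hull3_intro _ _ _ _ (a1*u1+a2*v1+a3*w1) (a1*u2+a2*v2+a3*w2) (a1*u3+a2*v3+a3*w3)).
    + nra. + nra. + nra.
    + replace (a1 * u1 + a2 * v1 + a3 * w1 + (a1 * u2 + a2 * v2 + a3 * w2) + (a1 * u3 + a2 * v3 + a3 * w3))
        with (a1*(u1+u2+u3) + a2*(v1+v2+v3) + a3*(w1+w2+w3)) by ring.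
      rewrite Us, Vs, Ws. lra.
    + reflexivity.
  - nra.
  - unfold vadd, vscale; cbn [px py pz]. f_equal; ring.
Qed.

Section P.
Variables r t c d h g : R.
Hypotheses (Hr : 0.78007 <= r <= 0.78017) (Ht : 0.10063 <= t <= 0.10065)
  (Hc : 1.35114 <= c <= 1.35128) (Hd : 0.1743 <= d <= 0.17432)
  (Hh : 0.6779 <= h <= 0.6783) (Hg : 0.9949 <= g <= 0.9950).
Let f := fP r t c d h g.
Let PR := in_right_prism (f Va1) (f Va2) (f Va3) (Pt 0 0 1).

Ltac pz_tac := unfold vadd, vscale, f, fP; cbn [px py pz]; f_equal; field; lra.

Lemma vtx_prism v : PR (f v).
Proof.
  assert (Q1 : t/r <= 0.2) by (apply div_le; lra).
  assert (Q2 : d/c <= 0.2) by (apply div_le; lra).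
  assert (Q3 : 0 <= t/r) by (unfold Rdiv; apply Rmult_le_pos; [lra| left; apply Rinv_0_lt_compat; lra]).
  assert (Q4 : 0 <= d/c) by (unfold Rdiv; apply Rmult_le_pos; [lra| left; apply Rinv_0_lt_compat; lra]).
  unfold PR, in_right_prism; destruct v.
  - exists (f Va1), 0. split; [|split]; [apply (hull3_intro _ _ _ _ 1 0 0)|lra|]; try lra; pz_tac.
  - exists (f Va2), 0. split; [|split]; [apply (hull3_intro _ _ _ _ 0 1 0)|lra|]; try lra; pz_tac.
  - exists (f Va3), 0. split; [|split]; [apply (hull3_intro _ _ _ _ 0 0 1)|lra|]; try lra; pz_tac.
  - exists (Pt (-t) 0 0), h. split; [|split];
    [apply (hull3_intro _ _ _ _ ((1 - 2*(t/r))/3) ((1 + t/r)/3) ((1 + t/r)/3))|lra|]; try lra; pz_tac.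
  - exists (Pt (t/2) (-(d/2)) 0), h. split; [|split];
    [apply (hull3_intro _ _ _ _ ((1 + t/r)/3) ((1 - t/(2*r))/3 - d/(2*c)) ((1 - t/(2*r))/3 + d/(2*c)))|lra|].
    all: try pz_tac.
    all: try (unfold Rdiv in *; rewrite ?Rinv_mult in *; nra).
  - exists (Pt (t/2) (d/2) 0), h. split; [|split];
    [apply (hull3_intro _ _ _ _ ((1 + t/r)/3) ((1 - t/(2*r))/3 + d/(2*c)) ((1 - t/(2*r))/3 - d/(2*c)))|lra|].
    all: try pz_tac.
    all: try (unfold Rdiv in *; rewrite ?Rinv_mult in *; nra).
  - exists (Pt 0 0 0), (h+g). split; [|split];
    [apply (hull3_intro _ _ _ _ (1/3) (1/3) (1/3))|lra|]; try lra; pz_tac.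
Qed.

Lemma prism_gen x : on_surface f x -> PR x.
Proof.
  intros [F [HF Hx]]. simpl in HF.
  destruct HF as [<-|[<-|[<-|[<-|[<-|[<-|[<-|[<-|[<-|[]]]]]]]]]];
  cbn [map] in Hx; exact (prism_convex _ _ _ _ _ _ _ _ (vtx_prism _) (vtx_prism _) (vtx_prism _) Hx).
Qed.
End P.


Lemma PI_bnd : 3.1415 < PI < 3.1417.
Proof.
destruct (PI_2_3_7_ineq 2) as [H1 H2].
unfold tg_alt, PI_2_3_7_tg, Ratan_seq in H1, H2. simpl in H1, H2.
split; lra.
Qed.

Lemma sin_lo a : 0 <= a <= PI -> a - a^3/6 + a^5/120 - a^7/5040 <= sin a.
Proof.
intros [H0 H1]. destruct (sin_bound a 1 H0 H1) as [H _].
unfold sin_approx in H. unfold sin_term in H. cbn [sum_f_R0 Nat.mul Nat.add] in H.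
rewrite !INR_IZR_INZ in H.
change (Z.of_nat (fact 1)) with 1%Z in H.
change (Z.of_nat (fact 3)) with 6%Z in H.
change (Z.of_nat (fact 5)) with 120%Z in H.
change (Z.of_nat (fact 7)) with 5040%Z in H.
cbn [pow] in H |- *. lra.
Qed.
Lemma sin_hi a : 0 <= a <= PI -> sin a <= a - a^3/6 + a^5/120.
Proof.
intros [H0 H1]. destruct (sin_bound a 0 H0 H1) as [_ H].
unfold sin_approx in H. unfold sin_term in H. cbn [sum_f_R0 Nat.mul Nat.add] in H.
rewrite !INR_IZR_INZ in H.
change (Z.of_nat (fact 1)) with 1%Z in H.
change (Z.of_nat (fact 3)) with 6%Z in H.
change (Z.of_nat (fact 5)) with 120%Z in H.
cbn [pow] in H |- *. lra.
Qed.

Lemma sin_between a lo hi : 0 <= lo <= a -> a <= hi -> hi <= 1.5 ->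
  lo - lo^3/6 + lo^5/120 - lo^7/5040 <= sin a <= hi - hi^3/6 + hi^5/120.
Proof.
  intros H1 H2 H3. pose proof PI_bnd.
  split.
  - apply Rle_trans with (sin lo). apply sin_lo; lra.
    apply sin_incr_1; lra.
  - apply Rle_trans with (sin hi). apply sin_incr_1; lra.
    apply sin_hi; lra.
Qed.

Definition qq := sqrt 3.
Definition cc := 2 * sin (deg 85 / 2).
Definition dd := 2 * sin (deg 10 / 2).
Definition rr := cc / qq.
Definition ttv := dd / qq.
Definition hh := sqrt (1 - rr*rr + rr*ttv - ttv*ttv).
Definition gg := sqrt (1 - ttv*ttv).

Lemma cc_bnd : 1.35114 <= cc <= 1.35128.
Proof.
  pose proof PI_bnd.
  assert (HH : 3.1415*85/360 <= deg 85 / 2 <= 3.1417*85/360) by (unfold deg; lra).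
  pose proof (sin_between (deg 85 / 2) (3.1415*85/360) (3.1417*85/360) ltac:(lra) ltac:(lra) ltac:(lra)).
  unfold cc. cbn [pow] in *. lra.
Qed.
Lemma dd_bnd : 0.1743 <= dd <= 0.17432.
Proof.
  pose proof PI_bnd.
  assert (HH : 3.1415*10/360 <= deg 10 / 2 <= 3.1417*10/360) by (unfold deg; lra).
  pose proof (sin_between (deg 10 / 2) (3.1415*10/360) (3.1417*10/360) ltac:(lra) ltac:(lra) ltac:(lra)).
  unfold dd. cbn [pow] in *. lra.
Qed.
Lemma qq2 : qq*qq = 3. Proof. unfold qq. apply sqrt_sqrt. lra. Qed.
Lemma qq_bnd : 1.73205 <= qq <= 1.73206.
Proof. pose proof qq2. assert (0 <= qq) by (unfold qq; apply sqrt_pos). nra. Qed.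
Lemma rr_q : rr * qq = cc. Proof. pose proof qq_bnd. unfold rr. field. lra. Qed.
Lemma tt_q : ttv * qq = dd. Proof. pose proof qq_bnd. unfold ttv. field. lra. Qed.
Lemma rr_bnd : 0.78007 <= rr <= 0.78017.
Proof. pose proof qq_bnd; pose proof cc_bnd; pose proof rr_q.
  assert (0 < rr) by (unfold rr; apply Rdiv_lt_0_compat; lra). nra. Qed.
Lemma tt_bnd : 0.10063 <= ttv <= 0.10065.
Proof. pose proof qq_bnd; pose proof dd_bnd; pose proof tt_q.
  assert (0 < ttv) by (unfold ttv; apply Rdiv_lt_0_compat; lra). nra. Qed.
Lemma hh2 : hh*hh = 1 - rr*rr + rr*ttv - ttv*ttv.
Proof. pose proof rr_bnd; pose proof tt_bnd. unfold hh. apply sqrt_sqrt. nra. Qed.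
Lemma gg2 : gg*gg = 1 - ttv*ttv.
Proof. pose proof tt_bnd. unfold gg. apply sqrt_sqrt. nra. Qed.
Lemma hh_bnd : 0.6779 <= hh <= 0.6783.
Proof. pose proof rr_bnd; pose proof tt_bnd; pose proof hh2.
  assert (0 <= hh) by (unfold hh; apply sqrt_pos). nra. Qed.
Lemma gg_bnd : 0.9949 <= gg <= 0.9950.
Proof. pose proof tt_bnd; pose proof gg2.
  assert (0 <= gg) by (unfold gg; apply sqrt_pos). nra. Qed.

Lemma rel1 : cc*cc = 3*(rr*rr).
Proof. rewrite <- rr_q. replace (rr*qq*(rr*qq)) with (rr*rr*(qq*qq)) by ring. rewrite qq2; ring. Qed.
Lemma rel2 : dd*dd = 3*(ttv*ttv).
Proof. rewrite <- tt_q. replace (ttv*qq*(ttv*qq)) with (ttv*ttv*(qq*qq)) by ring. rewrite qq2; ring. Qed.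
Lemma rel3 : cc*dd = 3*(rr*ttv).
Proof. rewrite <- rr_q, <- tt_q. replace (rr*qq*(ttv*qq)) with (rr*ttv*(qq*qq)) by ring. rewrite qq2; ring. Qed.

Theorem lemma5 :
  exists (f : hvert -> pt) (L : R),
    0 < L /\
    acute_hat_metric f L /\
    embedded f /\
    dist3 (f Va1) (f Va2) = dist3 (f Va2) (f Va3) /\
    dist3 (f Va2) (f Va3) = dist3 (f Va3) (f Va1) /\
    exists n : pt,
      n <> vzero /\
      dot n (vsub (f Va2) (f Va1)) = 0 /\ dot n (vsub (f Va3) (f Va1)) = 0 /\
      forall x, on_surface f x -> in_right_prism (f Va1) (f Va2) (f Va3) n x.
Proof.
  pose proof rr_bnd; pose proof tt_bnd; pose proof cc_bnd; pose proof dd_bnd;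
  pose proof hh_bnd; pose proof gg_bnd.
  assert (M : acute_hat_metric (fP rr ttv cc dd hh gg) 1).
  { apply metric_gen; try lra. exact rel1. exact rel2. exact rel3. exact hh2. exact gg2.
    unfold cc; ring. unfold dd; ring. }
  exists (fP rr ttv cc dd hh gg), 1.
  split; [lra|]. split; [exact M|]. split; [apply emb_gen; lra|].
  destruct M as [[_ [_ D12]] [[_ [_ D23]] [[_ [_ D31]] _]]].
  split; [rewrite D12, D23; reflexivity|].
  split; [rewrite D23, D31; reflexivity|].
  exists (Pt 0 0 1). split; [|split; [|split]].
  - intro E. injection E. lra.
  - unfold dot, vsub; cbn [fP px py pz]; ring.
  - unfold dot, vsub; cbn [fP px py pz]; ring.
  - apply prism_gen; lra.
Qed.
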